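(* If $A\in\mathsf{M}_n(\mathbb{C})$ is $h$-cyclic and nonsingular, then $h$ divides $n$.
   Context: The digraph $\Gamma_A$ of $A=[a_{ij}]\in\mathsf{M}_n(\mathbb{C})$ has vertex set $\{1,\dots,n\}$ and arc set $\{(i,j): a_{ij}\neq 0\}$. $A$ is $h$-cyclic if there is a partition $P=\{V_1,\dots,V_h\}$ of $\{1,\dots,n\}$ into $h$ nonempty parts such that for every arc $(i,j)$ of $\Gamma_A$ there is $\ell\in\{1,\dots,h\}$ with $i\in V_\ell$ and $j\in V_{\ell+1}$, where $V_{h+1}:=V_1$. *)

(* Defs.v *)
From mathcomp Require Import all_boot all_order all_algebra.
From mathcomp Require Import complex.
Set Implicit Arguments. Unset Strict Implicit. Unset Printing Implicit Defensive.
Import GRing.Theory.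
Local Open Scope ring_scope.

(* A : 'M[F]_n is h-cyclic: there is a partition {V_0,...,V_(h-1)} of
   {0,...,n-1} into h nonempty parts (encoded by the labelling
   lab : 'I_n -> 'I_h, V_l = lab^-1(l), nonempty parts = surjectivity)
   such that every arc (i,j) of the digraph of A (A i j != 0) goes from
   some V_l to V_(l+1 mod h). *)
Definition h_cyclic (F : nzRingType) (n h : nat) (A : 'M[F]_n) : Prop :=
  exists lab : 'I_n -> 'I_h,
    (forall l : 'I_h, exists i : 'I_n, lab i = l) /\
    (forall i j : 'I_n, A i j != 0 -> (nat_of_ord (lab j) = (lab i).+1 %% h)%N).

(* Main.v *)
Require Import Defs.
From mathcomp Require Import all_boot all_order all_algebra.
From mathcomp Require Import complex.
From mathcomp Require Import all_fingroup.
Local Open Scope ring_scope.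
Import GRing.Theory.

Lemma perm_of_unit (F : fieldType) n (A : 'M[F]_n) :
  A \in unitmx -> exists (s : 'S_n), forall i, A i (s i) != 0.
Proof.
rewrite unitmxE unitfE => hd.
case: (boolP [exists s : 'S_n, \prod_i A i (s i) != 0]).
  by move=> /existsP [s /prodf_neq0 hs]; exists s => i; apply: hs.
move=> /existsPn hall; case/negP: hd; apply/eqP.
rewrite /determinant; apply: big1 => s _.
by move: (hall s); rewrite negbK => /eqP ->; rewrite mulr0.
Qed.

Theorem corollary3p2 (R : rcfType) (n h : nat) (A : 'M[R[i]]_n) :
  h_cyclic h A -> A \in unitmx -> (h %| n)%N.
Proof.
move=> [lab [_ Hlab]] /perm_of_unit [s Hs].
have Hsl i : nat_of_ord (lab (s i)) = ((lab i).+1 %% h)%N by apply: Hlab.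
pose c k := #|[set i | nat_of_ord (lab i) == (k %% h)%N]|.
have cS k : c k.+1 = c k.
  rewrite /c -(card_preimset _ (@perm_inj _ s)); apply: eq_card => i.
  rewrite !inE Hsl.
  rewrite -addn1 -[k.+1]addn1 -modnDml.
  have hi : (lab i < h)%N := ltn_ord _.
  have hk : (k %% h < h)%N by rewrite ltn_mod; case: h lab Hlab hi {Hs Hsl c} => //.
  by rewrite (modn_small hi) eqn_modDr (modn_small hi).
have c0 k : c k = c 0%N by elim: k => // k IH; rewrite cS.
have -> : n = #|'I_n| by rewrite card_ord.
rewrite -sum1_card (partition_big lab xpredT) //=.
have -> : (\sum_(j < h) \sum_(i | true && (lab i == j)) 1 = \sum_(j < h) c 0%N)%N.
  apply: eq_bigr => j _; rewrite -(c0 j) /c sum1_card (modn_small (ltn_ord j)).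
  by apply: eq_card => i; rewrite in_set unfold_in.
by rewrite big_const_ord iter_addn_0 mulnC; apply: dvdn_mulr.
Qed.
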